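(* Let $\mathcal{O}$ be the fixed one-counter net described in the context and let the formulas $\psi_i$ ($i\ge1$) be as defined there. Then for all $n\ge0$ and $i\ge1$: $(\bar t,n)\models\psi_i$ if and only if $\mathrm{bit}_i(n)=1$.
   Context: $\mathrm{bit}_i(n)$ is the $i$-th least significant bit of $n$, i.e. $n=\sum_{i\ge1}2^{i-1}\mathrm{bit}_i(n)$. A one-counter net is a tuple $(Q,\{Q_p\},\delta_0,\delta_{>0})$ with $\delta_0\subseteq Q\times\{0,1\}\times Q$, $\delta_{>0}\subseteq Q\times\{-1,0,1\}\times Q$ and $\delta_0\subseteq\delta_{>0}$; its transition system has states $Q\times\mathbb{N}$, $(q,n)$ satisfies $p$ iff $q\in Q_p$, and $(q,n)\to(q',n+k)$ iff either $n=0$ and $(q,k,q')\in\delta_0$, or $n>0$ and $(q,k,q')\in\delta_{>0}$. The fixed net $\mathcal{O}$ has control locations $t,\bar t,q_0,q_1,q_2,q_3,f,g,p_0,p_1$; the atomic propositions are the control locations, each holding exactly at itself. $\delta_{>0}$ consists of $(q_0,-1,q_1)$, $(q_1,-1,q_2)$, $(q_2,-1,q_3)$, $(q_3,-1,q_0)$, $(q_1,-1,q_1)$, $(q_3,-1,q_3)$, $(q_0,0,t)$, $(t,0,q_0)$, $(q_2,0,t)$, $(q_1,0,\bar t)$, $(\bar t,0,q_1)$, $(\bar t,0,q_2)$, $(q_3,0,\bar t)$, $(\bar t,0,q_3)$, $(t,0,f)$, $(\bar t,-1,f)$, $(f,-1,g)$, $(g,-1,f)$, $(\bar t,1,p_1)$,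 $(p_1,1,p_1)$, $(p_1,0,\bar t)$, $(p_0,0,\bar t)$, $(\bar t,0,p_0)$; and $\delta_0=\{(\bar t,1,p_1),(p_0,0,\bar t),(\bar t,0,p_0),(t,0,q_0),(t,0,f)\}$. $\mathsf{CTL}$ is interpreted with standard semantics; $\mathsf{EF}\psi$ abbreviates $\exists\,\mathtt{true}\,\mathsf{U}\,\psi$. Let $\mathrm{test}=t\vee\bar t$, $\varphi_\diamond=q_0\vee q_1\vee q_2\vee q_3$, $\varphi_1=\mathrm{test}\wedge\exists\mathsf{X}\big(f\wedge\mathsf{EF}(f\wedge\neg\exists\mathsf{X}g)\big)$, and for $i>1$: $\mu_i=\exists(\varphi_\diamond\wedge\exists\mathsf{X}\varphi_{i-1})\,\mathsf{U}\,(q_0\wedge\neg\exists\mathsf{X}q_1)$, $\varphi_i=\mathrm{test}\wedge\exists\mathsf{X}\mu_i$. Finally $\psi_1=\varphi_1$ and $\psi_i=\bar t\wedge\exists\mathsf{X}\big((q_1\vee q_2)\wedge\mu_i\big)$ for $i>1$. *)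

(* Defs.v *)
From Stdlib Require Import ZArith List Arith.
Import ListNotations.

Inductive loc : Type := t | tbar | q0 | q1 | q2 | q3 | f | g | p0 | p1.

Definition loc_eq_dec (a b : loc) : {a = b} + {a <> b}.
Proof. decide equality. Defined.

Definition delta_pos : list (loc * Z * loc) :=
  [ (q0, (-1)%Z, q1); (q1, (-1)%Z, q2); (q2, (-1)%Z, q3); (q3, (-1)%Z, q0);
    (q1, (-1)%Z, q1); (q3, (-1)%Z, q3);
    (q0, 0%Z, t); (t, 0%Z, q0); (q2, 0%Z, t);
    (q1, 0%Z, tbar); (tbar, 0%Z, q1); (tbar, 0%Z, q2);
    (q3, 0%Z, tbar); (tbar, 0%Z, q3);
    (t, 0%Z, f); (tbar, (-1)%Z, f); (f, (-1)%Z, g); (g, (-1)%Z, f);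
    (tbar, 1%Z, p1); (p1, 1%Z, p1); (p1, 0%Z, tbar);
    (p0, 0%Z, tbar); (tbar, 0%Z, p0) ].

Definition delta_zero : list (loc * Z * loc) :=
  [ (tbar, 1%Z, p1); (p0, 0%Z, tbar); (tbar, 0%Z, p0); (t, 0%Z, q0); (t, 0%Z, f) ].

Definition config : Type := (loc * nat)%type.

Definition step (c c' : config) : Prop :=
  let (q, n) := c in
  let (q', n') := c' in
  exists k : Z,
    Z.of_nat n' = (Z.of_nat n + k)%Z /\
    ((n = 0 /\ In (q, k, q') delta_zero) \/
     (0 < n /\ In (q, k, q') delta_pos)).

Inductive ctl : Type :=
| CTrue : ctl
| CAtom : loc -> ctl
| CNot : ctl -> ctl
| CAnd : ctl -> ctl -> ctl
| COr : ctl -> ctl -> ctl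
| CEX : ctl -> ctl
| CEU : ctl -> ctl -> ctl.

Inductive EU_holds (P Q : config -> Prop) : config -> Prop :=
| EU_now : forall c, Q c -> EU_holds P Q c
| EU_later : forall c c', P c -> step c c' -> EU_holds P Q c' -> EU_holds P Q c.

Fixpoint sat (phi : ctl) (c : config) : Prop :=
  match phi with
  | CTrue => True
  | CAtom p => fst c = p
  | CNot a => ~ sat a c
  | CAnd a b => sat a c /\ sat b c
  | COr a b => sat a c \/ sat b c
  | CEX a => exists c', step c c' /\ sat a c'
  | CEU a b => EU_holds (sat a) (sat b) c
  end.

Definition CEF (a : ctl) : ctl := CEU CTrue a.

Definition test : ctl := COr (CAtom t) (CAtom tbar).
Definition phi_diamond : ctl :=
  COr (COr (CAtom q0) (CAtom q1)) (COr (CAtom q2) (CAtom q3)).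

Definition phi1 : ctl :=
  CAnd test (CEX (CAnd (CAtom f) (CEF (CAnd (CAtom f) (CNot (CEX (CAtom g))))))).

Definition mu_of (prev : ctl) : ctl :=
  CEU (CAnd phi_diamond (CEX prev)) (CAnd (CAtom q0) (CNot (CEX (CAtom q1)))).

(* phi i for i >= 1 (phi 0 is an irrelevant default equal to phi 1). *)
Fixpoint phi (i : nat) : ctl :=
  match i with
  | 0 => phi1
  | S j => match j with
           | 0 => phi1
           | _ => CAnd test (CEX (mu_of (phi j)))
           end
  end.

Definition mu (i : nat) : ctl := mu_of (phi (i - 1)).

Definition psi (i : nat) : ctl :=
  match i with
  | 0 | 1 => phi1
  | _ => CAnd (CAtom tbar) (CEX (CAnd (COr (CAtom q1) (CAtom q2)) (mu i)))
  end.

Definition bit (i n : nat) : nat := (n / 2 ^ (i - 1)) mod 2.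

(* Main.v *)
Require Import Defs.
From Stdlib Require Import ZArith List Arith Lia.
Import ListNotations.
Set Warnings "-deprecated".

Lemma succ_mod N c : N <> 0 ->
  (S c mod N = 0 /\ c mod N = N - 1) \/ (S c mod N = c mod N + 1 /\ c mod N + 1 < N).
Proof.
  intros HN. pose proof (Nat.mod_upper_bound c N HN).
  replace (S c) with (c + 1) by lia.
  rewrite <- (Nat.add_mod_idemp_l c 1 N HN).
  destruct (Nat.eq_dec (c mod N + 1) N) as [E|E].
  - left. rewrite E. rewrite Nat.mod_same by lia. lia.
  - right. rewrite Nat.mod_small by lia. lia.
Qed.

Lemma mod_half M c : M <> 0 ->
  (c mod M = 0 <-> c mod (2*M) = 0 \/ c mod (2*M) = M).
Proof.
  intros HM. replace (2*M) with (M*2) by lia.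
  rewrite (Nat.mod_mul_r c M 2 HM) by lia.
  pose proof (Nat.mod_upper_bound c M HM).
  pose proof (Nat.mod_upper_bound (c / M) 2 ltac:(lia)).
  destruct ((c/M) mod 2) as [|[|x]]; nia.
Qed.

Ltac fin := match goal with
 | |- _ /\ _ => split; fin
 | |- _ \/ _ => first [left; fin | right; fin]
 | _ => first [reflexivity | lia | discriminate]
 end.

Ltac inv_step H :=
  let k := fresh "k" in let Hk := fresh "Hk" in let H0 := fresh "H0" in let Hin := fresh "Hin" in
  destruct H as [k [Hk [[H0 Hin]|[H0 Hin]]]]; simpl in Hin;
  repeat destruct Hin as [Hin|Hin]; inversion Hin; subst; clear Hin.

Lemma step_q0 c l' c' : step (q0,c) (l',c') -> 0 < c /\ ((l' = q1 /\ c' = c - 1) \/ (l' = t /\ c' = c)).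
Proof. intro H. inv_step H; fin. Qed.
Lemma step_q1 c l' c' : step (q1,c) (l',c') -> 0 < c /\ ((l' = q2 /\ c' = c - 1) \/ (l' = q1 /\ c' = c - 1) \/ (l' = tbar /\ c' = c)).
Proof. intro H. inv_step H; fin. Qed.
Lemma step_q2 c l' c' : step (q2,c) (l',c') -> 0 < c /\ ((l' = q3 /\ c' = c - 1) \/ (l' = t /\ c' = c)).
Proof. intro H. inv_step H; fin. Qed.
Lemma step_q3 c l' c' : step (q3,c) (l',c') -> 0 < c /\ ((l' = q0 /\ c' = c - 1) \/ (l' = q3 /\ c' = c - 1) \/ (l' = tbar /\ c' = c)).
Proof. intro H. inv_step H; fin. Qed.
Lemma step_t c l' c' : step (t,c) (l',c') -> (l' = q0 /\ c' = c) \/ (l' = f /\ c' = c).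
Proof. intro H. inv_step H; fin. Qed.
Lemma step_f c l' c' : step (f,c) (l',c') -> 0 < c /\ l' = g /\ c' = c - 1.
Proof. intro H. inv_step H; fin. Qed.
Lemma step_g c l' c' : step (g,c) (l',c') -> 0 < c /\ l' = f /\ c' = c - 1.
Proof. intro H. inv_step H; fin. Qed.
Lemma step_tbar c l' c' : step (tbar,c) (l',c') ->
  (c = 0 /\ ((l' = p1 /\ c' = 1) \/ (l' = p0 /\ c' = 0))) \/
  (0 < c /\ ((l' = q1 /\ c' = c) \/ (l' = q2 /\ c' = c) \/ (l' = q3 /\ c' = c) \/
             (l' = f /\ c' = c - 1) \/ (l' = p1 /\ c' = c + 1) \/ (l' = p0 /\ c' = c))).
Proof. intro H. inv_step H; fin. Qed.

Ltac in_tac := simpl; repeat (first [left; reflexivity | right]).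
Ltac mkpos k := exists k; split; [lia | right; split; [lia | in_tac]].
Ltac mkzero k := exists k; split; [lia | left; split; [lia | in_tac]].
Definition spec (M : nat) (p : ctl) := forall l k,
  sat p (l,k) <-> (l = t /\ k mod M = 0) \/ (l = tbar /\ k mod M <> 0).

Definition FT := CAnd (CAtom f) (CNot (CEX (CAtom g))).

Lemma par_mod m : (S m mod 2 = 0 /\ m mod 2 = 1) \/ (S m mod 2 = 1 /\ m mod 2 = 0).
Proof. destruct (succ_mod 2 m) as [H|H]; lia. Qed.

Lemma EU_f_fwd x : EU_holds (sat CTrue) (sat FT) x ->
  (fst x = f -> snd x mod 2 = 0) /\ (fst x = g -> snd x mod 2 = 1).
Proof.
  induction 1 as [[l c] Hb | [l c] [l' c'] Ha Hs Hev IH]; cbn [fst snd sat] in *.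
  - unfold FT in Hb; cbn [sat fst snd] in Hb. destruct Hb as [E Hn]. subst. split; [|discriminate]. intros _.
    destruct c as [|c]; [reflexivity|]. exfalso. apply Hn.
    exists (g, c). split; [mkpos (-1)%Z | reflexivity].
  - split; intros E; subst.
    + apply step_f in Hs. destruct Hs as [Hc [-> ->]].
      destruct IH as [_ IH]. specialize (IH eq_refl). cbn [fst snd] in IH.
      destruct c as [|c]; [lia|]. replace (S c - 1) with c in IH by lia.
      pose proof (par_mod c). lia.
    + apply step_g in Hs. destruct Hs as [Hc [-> ->]].
      destruct IH as [IH _]. specialize (IH eq_refl). cbn [fst snd] in IH.
      destruct c as [|c]; [lia|]. replace (S c - 1) with c in IH by lia.
      pose proof (par_mod c). lia.
Qed.

Lemma EU_f_bwd m : m mod 2 = 0 -> EU_holds (sat CTrue) (sat FT) (f, m).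
Proof.
  induction m as [m IH] using lt_wf_ind. intros Hm.
  destruct m as [|[|m]].
  - apply EU_now. unfold FT; cbn [sat fst]. split; [reflexivity|]. intros [[l' c'] [Hs _]].
    apply step_f in Hs. lia.
  - simpl in Hm. discriminate.
  - apply EU_later with (g, S m). exact I. mkpos (-1)%Z.
    apply EU_later with (f, m). exact I. mkpos (-1)%Z.
    apply IH. lia. pose proof (par_mod m). pose proof (par_mod (S m)). lia.
Qed.

Lemma phi1_spec : spec 2 phi1.
Proof.
  intros l k. unfold phi1, test. cbn [sat fst snd]. split.
  - intros [Ht [[l' c'] [Hs [Hf Heu]]]]. simpl in Hf. subst l'.
    apply EU_f_fwd in Heu. destruct Heu as [Heu _]. specialize (Heu eq_refl). cbn [snd] in Heu.
    destruct Ht as [-> | ->].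
    + apply step_t in Hs. left. split; [reflexivity|]. destruct Hs as [[? ?]|[? ?]]; [discriminate|]. subst; auto.
    + apply step_tbar in Hs. right. split; [reflexivity|].
      destruct Hs as [[? [[? ?]|[? ?]]]|[Hc Hs]]; try discriminate.
      destruct Hs as [[? ?]|[[? ?]|[[? ?]|[[? ?]|[[? ?]|[? ?]]]]]]; try discriminate.
      subst. destruct k as [|k]; [lia|]. replace (S k - 1) with k in Heu by lia.
      pose proof (par_mod k). lia.
  - intros [[-> Hk]|[-> Hk]].
    + split; [left; reflexivity|]. exists (f, k). split; [|split; [reflexivity|]].
      * destruct k; [mkzero 0%Z | mkpos 0%Z].
      * apply EU_f_bwd; assumption.
    + split; [right; reflexivity|]. destruct k as [|k]; [simpl in Hk; congruence|].
      exists (f, k). split; [mkpos (-1)%Z|split; [reflexivity|]].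
      apply EU_f_bwd. pose proof (par_mod k). lia.
Qed.

Definition good (M : nat) (l : loc) (c : nat) : Prop :=
  match l with
  | q0 => c mod (2*M) = 0
  | q1 => M < c mod (2*M)
  | q2 => c mod (2*M) = M
  | q3 => 0 < c mod (2*M) < M
  | _ => False
  end.

Definition Aof (p : ctl) := CAnd phi_diamond (CEX p).
Definition Bq := CAnd (CAtom q0) (CNot (CEX (CAtom q1))).

Ltac arith M c :=
  destruct c as [|d]; [lia|];
  pose proof (succ_mod (2*M) d ltac:(lia));
  pose proof (mod_half M (S d) ltac:(lia));
  pose proof (Nat.mod_upper_bound (S d) (2*M) ltac:(lia));
  replace (S d - 1) with d in * by lia;
  cbn [good] in *; lia.

Lemma mu_fwd M p : 2 <= M -> spec M p -> forall x,
  EU_holds (sat (Aof p)) (sat Bq) x -> good M (fst x) (snd x).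
Proof.
  intros HM Hsp x H.
  induction H as [[l c] Hb | [l c] [l' c'] Ha Hs Hev IH]; cbn [fst snd] in *.
  - unfold Bq in Hb; cbn [sat fst] in Hb. destruct Hb as [E Hn]. subst.
    destruct c as [|c].
    + cbn [good]. apply Nat.mod_0_l. lia.
    + exfalso. apply Hn. exists (q1, c). split; [mkpos (-1)%Z | reflexivity].
  - unfold Aof, phi_diamond in Ha; cbn [sat fst] in Ha.
    destruct Ha as [Hd [[l2 c2] [Hs2 Hp]]]. apply Hsp in Hp.
    destruct Hd as [[->| ->]|[->| ->]].
    + apply step_q0 in Hs. apply step_q0 in Hs2.
      destruct Hs as [Hc [[-> ->]|[-> ->]]]; [|destruct IH];
      destruct Hs2 as [_ [[-> ->]|[-> ->]]];
      destruct Hp as [[E P]|[E P]]; try discriminate; arith M c.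
    + apply step_q1 in Hs. apply step_q1 in Hs2.
      destruct Hs as [Hc [[-> ->]|[[-> ->]|[-> ->]]]]; [| |destruct IH];
      destruct Hs2 as [_ [[-> ->]|[[-> ->]|[-> ->]]]];
      destruct Hp as [[E P]|[E P]]; try discriminate; arith M c.
    + apply step_q2 in Hs. apply step_q2 in Hs2.
      destruct Hs as [Hc [[-> ->]|[-> ->]]]; [|destruct IH];
      destruct Hs2 as [_ [[-> ->]|[-> ->]]];
      destruct Hp as [[E P]|[E P]]; try discriminate; arith M c.
    + apply step_q3 in Hs. apply step_q3 in Hs2.
      destruct Hs as [Hc [[-> ->]|[[-> ->]|[-> ->]]]]; [| |destruct IH];
      destruct Hs2 as [_ [[-> ->]|[[-> ->]|[-> ->]]]];
      destruct Hp as [[E P]|[E P]]; try discriminate; arith M c.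
Qed.

Ltac pre M d :=
  pose proof (succ_mod (2*M) d ltac:(lia));
  pose proof (mod_half M (S d) ltac:(lia));
  pose proof (Nat.mod_upper_bound (S d) (2*M) ltac:(lia));
  pose proof (Nat.mod_upper_bound d (2*M) ltac:(lia)).

Lemma mu_bwd M p : 2 <= M -> spec M p -> forall c l,
  good M l c -> EU_holds (sat (Aof p)) (sat Bq) (l, c).
Proof.
  intros HM Hsp c. induction c as [|d IH]; intros l Hg.
  - destruct l; cbn [good] in Hg; try contradiction;
      rewrite (Nat.mod_0_l (2*M)) in Hg by lia; try lia.
    apply EU_now. unfold Bq; cbn [sat fst]. split; [reflexivity|].
    intros [[l' c'] [Hs _]]. apply step_q0 in Hs. lia.
  - pre M d.
    destruct l; cbn [good] in Hg; try contradiction.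
    + apply EU_later with (q1, d).
      * unfold Aof, phi_diamond; cbn [sat fst]. split; [left; left; reflexivity|].
        exists (t, S d). split; [mkpos 0%Z|]. apply Hsp. left. split; [reflexivity|]. lia.
      * mkpos (-1)%Z.
      * apply IH. cbn [good]. lia.
    + destruct (Nat.eq_dec (d mod (2*M)) M) as [E|E].
      * apply EU_later with (q2, d).
        -- unfold Aof, phi_diamond; cbn [sat fst]. split; [left; right; reflexivity|].
           exists (tbar, S d). split; [mkpos 0%Z|]. apply Hsp. right. split; [reflexivity|]. lia.
        -- mkpos (-1)%Z.
        -- apply IH. cbn [good]. lia.
      * apply EU_later with (q1, d).
        -- unfold Aof, phi_diamond; cbn [sat fst]. split; [left; right; reflexivity|].
           exists (tbar, S d). split; [mkpos 0%Z|]. apply Hsp. right. split; [reflexivity|]. lia.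
        -- mkpos (-1)%Z.
        -- apply IH. cbn [good]. lia.
    + apply EU_later with (q3, d).
      * unfold Aof, phi_diamond; cbn [sat fst]. split; [right; left; reflexivity|].
        exists (t, S d). split; [mkpos 0%Z|]. apply Hsp. left. split; [reflexivity|]. lia.
      * mkpos (-1)%Z.
      * apply IH. cbn [good]. lia.
    + destruct (Nat.eq_dec (d mod (2*M)) 0) as [E|E].
      * apply EU_later with (q0, d).
        -- unfold Aof, phi_diamond; cbn [sat fst]. split; [right; right; reflexivity|].
           exists (tbar, S d). split; [mkpos 0%Z|]. apply Hsp. right. split; [reflexivity|]. lia.
        -- mkpos (-1)%Z.
        -- apply IH. cbn [good]. lia.
      * apply EU_later with (q3, d).
        -- unfold Aof, phi_diamond; cbn [sat fst]. split; [right; right; reflexivity|].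
           exists (tbar, S d). split; [mkpos 0%Z|]. apply Hsp. right. split; [reflexivity|]. lia.
        -- mkpos (-1)%Z.
        -- apply IH. cbn [good]. lia.
Qed.

Lemma mu_iff M p l c : 2 <= M -> spec M p ->
  (sat (mu_of p) (l, c) <-> good M l c).
Proof.
  intros HM Hsp. split.
  - intro H. exact (mu_fwd M p HM Hsp (l, c) H).
  - intro H. exact (mu_bwd M p HM Hsp c l H).
Qed.

Lemma bit_half M n : M <> 0 -> (M <= n mod (2*M) <-> (n / M) mod 2 = 1).
Proof.
  intros HM. replace (2*M) with (M*2) by lia.
  rewrite (Nat.mod_mul_r n M 2 HM) by lia.
  pose proof (Nat.mod_upper_bound n M HM).
  pose proof (Nat.mod_upper_bound (n / M) 2 ltac:(lia)).
  destruct ((n/M) mod 2) as [|[|x]]; nia.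
Qed.

Lemma phi_next M p : 2 <= M -> spec M p -> spec (2*M) (CAnd test (CEX (mu_of p))).
Proof.
  intros HM Hsp l k. unfold test. cbn [sat fst]. split.
  - intros [Ht [[l' c'] [Hs Hmu]]]. rewrite (mu_iff M p l' c' HM Hsp) in Hmu.
    destruct Ht as [-> | ->].
    + apply step_t in Hs. destruct Hs as [[-> ->]|[-> ->]]; cbn [good] in Hmu; [|contradiction].
      left. split; [reflexivity|exact Hmu].
    + apply step_tbar in Hs. right. split; [reflexivity|].
      destruct Hs as [[_ [[-> ->]|[-> ->]]]|[Hc Hs]]; cbn [good] in Hmu; try contradiction.
      destruct Hs as [[-> ->]|[[-> ->]|[[-> ->]|[[-> ->]|[[-> ->]|[-> ->]]]]]];
        cbn [good] in Hmu; try contradiction; lia.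
  - pose proof (Nat.mod_upper_bound k (2*M) ltac:(lia)).
    intros [[-> Hk]|[-> Hk]].
    + split; [left; reflexivity|]. exists (q0, k). split.
      * destruct k; [mkzero 0%Z | mkpos 0%Z].
      * apply (mu_iff M p q0 k HM Hsp). exact Hk.
    + split; [right; reflexivity|].
      destruct k as [|k]; [rewrite Nat.mod_0_l in Hk by lia; congruence|].
      destruct (lt_eq_lt_dec (S k mod (2*M)) M) as [[Hlt|Heq]|Hgt].
      * exists (q3, S k). split; [mkpos 0%Z|]. apply (mu_iff M p q3 (S k) HM Hsp). cbn [good]. lia.
      * exists (q2, S k). split; [mkpos 0%Z|]. apply (mu_iff M p q2 (S k) HM Hsp). cbn [good]. lia.
      * exists (q1, S k). split; [mkpos 0%Z|]. apply (mu_iff M p q1 (S k) HM Hsp). cbn [good]. lia.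
Qed.

Lemma pow_ge2 j : 2 <= 2 ^ S j.
Proof. pose proof (Nat.pow_nonzero 2 j ltac:(lia)). change (2 ^ S j) with (2 * 2 ^ j). lia. Qed.

Lemma phi_spec j : spec (2 ^ S j) (phi (S j)).
Proof.
  induction j as [|j IH].
  - exact phi1_spec.
  - change (phi (S (S j))) with (CAnd test (CEX (mu_of (phi (S j))))).
    change (2 ^ S (S j)) with (2 * 2 ^ S j).
    apply phi_next; [apply pow_ge2 | exact IH].
Qed.

Theorem lemma2 : forall (n i : nat), 1 <= i ->
  (sat (psi i) (tbar, n) <-> bit i n = 1).
Proof.
  intros n i Hi. destruct i as [|[|j]]; [lia| |].
  - change (psi 1) with phi1. change (bit 1 n) with ((n / 1) mod 2).
    rewrite Nat.div_1_r. rewrite (phi1_spec tbar n).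
    pose proof (Nat.mod_upper_bound n 2 ltac:(lia)).
    split; [intros [[E _]|[_ E]]; [discriminate|lia] | intros E; right; split; [reflexivity|lia]].
  - change (psi (S (S j))) with
      (CAnd (CAtom tbar) (CEX (CAnd (COr (CAtom q1) (CAtom q2)) (mu_of (phi (S j)))))).
    change (bit (S (S j)) n) with ((n / 2 ^ S j) mod 2).
    pose proof (pow_ge2 j) as HM. pose proof (phi_spec j) as Hsp.
    set (M := 2 ^ S j) in *.
    rewrite <- (bit_half M n) by lia.
    cbn [sat fst]. split.
    + intros [_ [[l' c'] [Hs [Hl Hmu]]]]. cbn [fst] in Hl.
      rewrite (mu_iff M _ l' c' HM Hsp) in Hmu.
      apply step_tbar in Hs.
      destruct Hs as [[_ [[-> ->]|[-> ->]]]|[Hc Hs]]; cbn [good] in Hmu; try contradiction.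
      destruct Hs as [[-> ->]|[[-> ->]|[[-> ->]|[[-> ->]|[[-> ->]|[-> ->]]]]]];
        cbn [good] in Hmu; try contradiction; try lia;
        destruct Hl; discriminate.
    + intros Hge. split; [reflexivity|].
      destruct n as [|n]; [rewrite Nat.mod_0_l in Hge by lia; lia|].
      destruct (Nat.eq_dec (S n mod (2*M)) M) as [E|E].
      * exists (q2, S n). split; [mkpos 0%Z|]. cbn [fst]. split; [right; reflexivity|].
        apply (mu_iff M _ q2 (S n) HM Hsp). cbn [good]. lia.
      * exists (q1, S n). split; [mkpos 0%Z|]. cbn [fst]. split; [left; reflexivity|].
        apply (mu_iff M _ q1 (S n) HM Hsp). cbn [good]. lia.
Qed.
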